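(* Let $q\in\mathbb{C}$ be generic (in particular $q\neq 0$, $q^2\neq 1$), let $\hbar,c\in\mathbb{C}$, and let $A^c_{\hbar,q}$, $K$, $a$, $\tilde c$, $\tilde v$ be as in the context. Then for every natural number $k$, $$K\tilde v^{k}=q\,\beta_k(q)\Big[\frac{q^{2(k+1)}-1}{q^{2}-1}\,\tilde v^k+a(q^2+1)\frac{q^{2k}-1}{q^{2}-1}\,\tilde v^{k-1}-\tilde c\,q^2\,\frac{q^{2(k-1)}-1}{q^{2}-1}\,\tilde v^{k-2}\Big],$$ where $\beta_k(q)=\dfrac{q^{2k}-1}{q^{2k-1}(q^{2}-1)}$ and, by convention, $\tilde v^{-1}=\tilde v^{-2}=0$.
   Context: $U_q(sl(2))$ is the algebra generated by $E_+,E_-,X,Y$ with relations $E_{\pm}X=q^{\pm1}XE_{\pm}$, $E_{\pm}Y=q^{\mp1}YE_{\pm}$, $E_+E_-=E_-E_+=1$, $XY-YX=\frac{E_+^2-E_-^2}{q-q^{-1}}$, with coproduct $\Delta(X)=E_-\otimes X+X\otimes E_+$, $\Delta(Y)=E_-\otimes Y+Y\otimes E_+$, $\Delta(E_\pm)=E_\pm\otimes E_\pm$. The quantum Casimir is $K=\frac{q}{2}(XY+YX)+\frac{q^2(1+q^2)}{2(1-q^2)^2}(E_+^2+E_-^2-2)$. Let $\mathbf V$ be the 3-dimensional $U_q(sl(2))$-module with basis $u,v,w$ and action $E_\pm u=q^{\pm1}u$, $E_\pm v=v$, $E_\pm w=q^{\mp1}w$, $Xu=0$, $Xv=-(q+q^{-1})u$,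 $Xw=v$, $Yu=-v$, $Yv=(q+q^{-1})w$, $Yw=0$. The algebra $A^c_{\hbar,q}$ is the quotient of the tensor algebra $T(\mathbf V)$ by the two-sided ideal generated by $(q^2+1)uw+vv+\frac{q^2+1}{q^2}wu-c$, $q^2uv-vu+\hbar u$, $(q^2+1)(uw-wu)+(1-q^2)vv-\hbar v$, $-q^2vw+wv-\hbar w$ (products are tensor products). $U_q(sl(2))$ acts on $T(\mathbf V)$ and on $A^c_{\hbar,q}$ via the coproduct (i.e. $Z(fg)=\sum Z_{(1)}(f)Z_{(2)}(g)$ for $\Delta Z=\sum Z_{(1)}\otimes Z_{(2)}$), so $K$ acts as a linear operator on $A^c_{\hbar,q}$. Set $a=\hbar(1-q^2)^{-1}$, $\tilde c=c-a^2$, $\tilde v=v-a\in A^c_{\hbar,q}$, and $\tilde v^k$ denotes the $k$-th power of $\tilde v$ in $A^c_{\hbar,q}$ ($\tilde v^0=1$). *)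

(* Defs.v *)
From HB Require Import structures.
From mathcomp Require Import all_boot all_order all_algebra.
From mathcomp Require Import complex Rstruct.
From Stdlib Require Rdefinitions.
Set Implicit Arguments. Unset Strict Implicit. Unset Printing Implicit Defensive.
Import Order.TTheory GRing.Theory Num.Theory.
Local Open Scope ring_scope.

Notation CC := (Rdefinitions.R[i]).

(* Basis letters: u = 0, v = 1, w = 2. A word is a basis tensor x1 (x) ... (x) xn. *)
Definition word := seq 'I_3.
Definition lu : 'I_3 := @Ordinal 3 0 isT.
Definition lv : 'I_3 := @Ordinal 3 1 isT.
Definition lw : 'I_3 := @Ordinal 3 2 isT.

Section TensorAlgebra.
Variable F : fieldType.

(* An element of T(V) is represented by a formal finite linear combination of words;
   two representatives denote the same tensor iff all their coefficients agree. *)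
Definition tens := seq (F * word).
Definition tcoef (t : tens) (x : word) : F := \sum_(p <- t | p.2 == x) p.1.
Definition teq (t1 t2 : tens) : Prop := forall x, tcoef t1 x = tcoef t2 x.

Definition tzero : tens := [::].
Definition tone : tens := [:: (1, [::])].
Definition tword (x : word) : tens := [:: (1, x)].
Definition tlet (i : 'I_3) : tens := tword [:: i].
Definition tadd (t1 t2 : tens) : tens := t1 ++ t2.
Definition tscale (a : F) (t : tens) : tens := [seq (a * p.1, p.2) | p <- t].
Definition tsub (t1 t2 : tens) : tens := tadd t1 (tscale (-1) t2).
Definition tmul (t1 t2 : tens) : tens :=
  [seq (p.1 * r.1, p.2 ++ r.2) | p <- t1, r <- t2].
Definition tpow (t : tens) (k : nat) : tens := iter k (tmul t) tone.

(* the ideal of T(V) generated by gs: finite linear combinations of l * g * r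
   (l, r words; an out-of-range index selects the zero tensor) *)
Definition in_ideal (gs : seq tens) (t : tens) : Prop :=
  exists l : seq (F * word * nat * word),
    teq t (flatten [seq tscale z.1.1.1
                      (tmul (tmul (tword z.1.1.2) (nth tzero gs z.1.2)) (tword z.2))
                   | z <- l]).

Variable q : F.

Definition ep (i : 'I_3) : F := if i == lu then q else if i == lv then 1 else q^-1.
Definition em (i : 'I_3) : F := if i == lu then q^-1 else if i == lv then 1 else q.
Definition epw (x : word) : F := \prod_(i <- x) ep i.
Definition emw (x : word) : F := \prod_(i <- x) em i.

Definition Xlet (i : 'I_3) : tens :=
  if i == lu then tzero else if i == lv then tscale (- (q + q^-1)) (tlet lu) else tlet lv.
Definition Ylet (i : 'I_3) : tens :=
  if i == lu then tscale (-1) (tlet lv) else if i == lv then tscale (q + q^-1) (tlet lw)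
  else tzero.

(* action on words via the coproduct Delta(Z) = E_- (x) Z + Z (x) E_+ (Z = X, Y):
   Z (a (x) s) = E_-(a) (x) Z(s) + Z(a) (x) E_+(s); on the unit Z 1 = 0 (counit). *)
Fixpoint Xword (x : word) : tens :=
  match x with
  | [::] => tzero
  | a :: s => tadd (tscale (em a) (tmul (tlet a) (Xword s)))
                   (tscale (epw s) (tmul (Xlet a) (tword s)))
  end.
Fixpoint Yword (x : word) : tens :=
  match x with
  | [::] => tzero
  | a :: s => tadd (tscale (em a) (tmul (tlet a) (Yword s)))
                   (tscale (epw s) (tmul (Ylet a) (tword s)))
  end.

(* linear extensions to T(V); E_pm act group-like: Delta(E) = E (x) E *)
Definition actX (t : tens) : tens := flatten [seq tscale p.1 (Xword p.2) | p <- t].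
Definition actY (t : tens) : tens := flatten [seq tscale p.1 (Yword p.2) | p <- t].
Definition actEp (t : tens) : tens := [seq (p.1 * epw p.2, p.2) | p <- t].
Definition actEm (t : tens) : tens := [seq (p.1 * emw p.2, p.2) | p <- t].

Definition actK (t : tens) : tens :=
  tadd (tscale (q / 2) (tadd (actX (actY t)) (actY (actX t))))
       (tscale (q ^+ 2 * (1 + q ^+ 2) / (2 * (1 - q ^+ 2) ^+ 2))
               (tadd (tadd (actEp (actEp t)) (actEm (actEm t))) (tscale (-2) t))).

Variables (hbar c : F).
Definition gens : seq tens :=
  [::
      tadd (tadd (tadd (tscale (q ^+ 2 + 1) (tword [:: lu; lw])) (tword [:: lv; lv]))
                 (tscale ((q ^+ 2 + 1) / q ^+ 2) (tword [:: lw; lu])))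
           (tscale (- c) tone);
      tadd (tsub (tscale (q ^+ 2) (tword [:: lu; lv])) (tword [:: lv; lu]))
           (tscale hbar (tlet lu));
      tsub (tadd (tscale (q ^+ 2 + 1) (tsub (tword [:: lu; lw]) (tword [:: lw; lu])))
                 (tscale (1 - q ^+ 2) (tword [:: lv; lv])))
           (tscale hbar (tlet lv));
      tsub (tadd (tscale (- q ^+ 2) (tword [:: lv; lw])) (tword [:: lw; lv]))
           (tscale hbar (tlet lw))].

Definition Aeq (t1 t2 : tens) : Prop := in_ideal gens (tsub t1 t2).

Definition aa : F := hbar / (1 - q ^+ 2).
Definition ctilde : F := c - aa ^+ 2.
Definition vtilde : tens := tsub (tlet lv) (tscale aa tone).
Definition vtpow (j : int) : tens :=
  match j with Posz n => tpow vtilde n | Negz _ => tzero end.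

Definition beta (k : nat) : F :=
  (q ^+ (2 * k) - 1) / (q ^ (2 * k%:Z - 1) * (q ^+ 2 - 1)).

Definition rhs (k : nat) : tens :=
  tscale (q * beta k)
    (tsub (tadd (tscale ((q ^ (2 * (k%:Z + 1)) - 1) / (q ^+ 2 - 1)) (vtpow k%:Z))
                (tscale (aa * (q ^+ 2 + 1) * ((q ^ (2 * k%:Z) - 1) / (q ^+ 2 - 1)))
                        (vtpow (k%:Z - 1))))
          (tscale (ctilde * q ^+ 2 * ((q ^ (2 * (k%:Z - 1)) - 1) / (q ^+ 2 - 1)))
                  (vtpow (k%:Z - 2)))).

End TensorAlgebra.

(* Main.v *)
Require Import Defs.
From HB Require Import structures.
From mathcomp Require Import all_boot all_order all_algebra.
From mathcomp Require Import complex Rstruct.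
From Stdlib Require Import Setoid Morphisms.
From mathcomp Require Import ring.
Set Implicit Arguments. Unset Strict Implicit. Unset Printing Implicit Defensive.
Import Order.TTheory GRing.Theory Num.Theory.
Local Open Scope ring_scope.

Section Base.
Variable F : fieldType.
Implicit Types (t A B C : tens F) (x y : word) (a b : F).

Lemma tcoefE t x : tcoef t x = \sum_(p <- t) (if p.2 == x then p.1 else 0).
Proof. by rewrite /tcoef big_mkcond. Qed.
Lemma tcoef_nil x : tcoef (tzero F) x = 0.
Proof. by rewrite tcoefE big_nil. Qed.
Lemma tcoef_nil' x : tcoef ([::] : tens F) x = 0.
Proof. by rewrite tcoefE big_nil. Qed.
Lemma tcoef_cons p t x : tcoef (p :: t) x = (if p.2 == x then p.1 else 0) + tcoef t x.
Proof. by rewrite !tcoefE big_cons. Qed.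
Lemma tcoef_cat t1 t2 x : tcoef (t1 ++ t2) x = tcoef t1 x + tcoef t2 x.
Proof. by rewrite !tcoefE big_cat. Qed.
Lemma tcoef_add t1 t2 x : tcoef (tadd t1 t2) x = tcoef t1 x + tcoef t2 x.
Proof. exact: tcoef_cat. Qed.
Lemma tcoef_scale a t x : tcoef (tscale a t) x = a * tcoef t x.
Proof.
rewrite !tcoefE big_map big_distrr; apply: eq_bigr => p _ /=.
by case: eqP; rewrite ?mulr0.
Qed.
Lemma tcoef_sub t1 t2 x : tcoef (tsub t1 t2) x = tcoef t1 x - tcoef t2 x.
Proof. by rewrite tcoef_add tcoef_scale mulN1r. Qed.
Lemma tcoef_flatten (T : Type) (f : T -> tens F) (s : seq T) x :
  tcoef (flatten (map f s)) x = \sum_(z <- s) tcoef (f z) x.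
Proof.
elim: s => [|z s IH] /=; first by rewrite big_nil tcoef_nil'.
by rewrite tcoef_cat IH big_cons.
Qed.
Lemma tcoef_tmul A B x : tcoef (tmul A B) x =
  \sum_(p <- A) \sum_(r <- B) (if p.2 ++ r.2 == x then p.1 * r.1 else 0).
Proof. by rewrite tcoefE /tmul big_allpairs_dep. Qed.
Lemma tcoef_word y x : tcoef (tword F y) x = (if y == x then 1 else 0).
Proof. by rewrite tcoef_cons tcoef_nil' addr0. Qed.
Lemma tcoef_one x : tcoef (tone F) x = (if [::] == x then 1 else 0).
Proof. by rewrite tcoef_cons tcoef_nil' addr0. Qed.

Lemma teqP A B : (forall x, tcoef A x = tcoef B x) -> teq A B.
Proof. by []. Qed.

Lemma tcoef_notin t x : x \notin map snd t -> tcoef t x = 0.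
Proof.
move=> H; rewrite tcoefE big_seq big1 // => p pt.
case: eqP => // e; case/negP: H; rewrite -e; exact: map_f.
Qed.

Lemma lsum_coef (g : word -> F) t (S : seq word) :
  uniq S -> {subset map snd t <= S} ->
  \sum_(p <- t) p.1 * g p.2 = \sum_(y <- S) tcoef t y * g y.
Proof.
move=> uS; elim: t => [|p t IH] sub.
  by rewrite big_nil big1 // => y _; rewrite tcoef_nil' mul0r.
rewrite big_cons IH; last by move=> y yt; apply: sub; rewrite inE yt orbT.
under [in RHS]eq_bigr do rewrite tcoef_cons mulrDl.
rewrite big_split /=; congr (_ + _).
have pS : p.2 \in S by apply: sub; rewrite inE eqxx.
rewrite (bigD1_seq p.2) //= eqxx big1 ?addr0 // => y; rewrite eq_sym.
by move/negbTE => ->; rewrite mul0r.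
Qed.

Definition teq' := @teq F.
Lemma lsum_teq (g : word -> F) t t' : teq t t' ->
  \sum_(p <- t) p.1 * g p.2 = \sum_(p <- t') p.1 * g p.2.
Proof.
move=> e; set S := undup (map snd t ++ map snd t').
have uS : uniq S by rewrite undup_uniq.
rewrite (@lsum_coef g t S) //; last by move=> y yt; rewrite mem_undup mem_cat yt.
rewrite (@lsum_coef g t' S) //; last by move=> y yt; rewrite mem_undup mem_cat yt orbT.
by apply: eq_bigr => y _; rewrite e.
Qed.

Lemma teq_check A B : (forall x, x \in map snd A ++ map snd B -> tcoef A x = tcoef B x) -> teq A B.
Proof.
move=> H x; case xin: (x \in map snd A ++ map snd B); first exact: H.
move: xin; rewrite mem_cat => /negbT; rewrite negb_or => /andP [h1 h2].
by rewrite !tcoef_notin.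
Qed.

Global Instance teq_equiv : Equivalence (@teq F).
Proof.
constructor; first by move=> t x.
  by move=> t1 t2 e x; rewrite e.
by move=> t1 t2 t3 e1 e2 x; rewrite e1 e2.
Qed.

Global Instance tadd_proper : Proper (@teq F ==> @teq F ==> @teq F) (@tadd F).
Proof. by move=> a a' ea b b' eb x; rewrite !tcoef_add ea eb. Qed.
Global Instance tscale_proper : Proper (eq ==> @teq F ==> @teq F) (@tscale F).
Proof. by move=> a a' -> b b' eb x; rewrite !tcoef_scale eb. Qed.
Global Instance tsub_proper : Proper (@teq F ==> @teq F ==> @teq F) (@tsub F).
Proof. by move=> a a' ea b b' eb x; rewrite !tcoef_sub ea eb. Qed.
Global Instance cat_proper : Proper (@teq F ==> @teq F ==> @teq F) (@cat (F * word)).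
Proof. by move=> a a' ea b b' eb x; rewrite !tcoef_cat ea eb. Qed.

Lemma tmul_l A B x : tcoef (tmul A B) x =
  \sum_(p <- A) p.1 * (\sum_(r <- B) (if p.2 ++ r.2 == x then r.1 else 0)).
Proof.
rewrite tcoef_tmul; apply: eq_bigr => p _; rewrite mulr_sumr; apply: eq_bigr => r _.
by case: ifP; rewrite ?mulr0.
Qed.
Lemma tmul_r A B x : tcoef (tmul A B) x =
  \sum_(r <- B) r.1 * (\sum_(p <- A) (if p.2 ++ r.2 == x then p.1 else 0)).
Proof.
rewrite tcoef_tmul exchange_big; apply: eq_bigr => r _; rewrite mulr_sumr; apply: eq_bigr => p _.
by case: ifP; rewrite ?mulr0 // mulrC.
Qed.

Global Instance tmul_proper : Proper (@teq F ==> @teq F ==> @teq F) (@tmul F).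
Proof.
move=> a a' ea b b' eb x.
rewrite tmul_l (lsum_teq (fun y => \sum_(r <- b) (if y ++ r.2 == x then r.1 else 0)) ea) -tmul_l.
rewrite tmul_r (lsum_teq (fun y => \sum_(p <- a') (if p.2 ++ y == x then p.1 else 0)) eb) -tmul_r.
by [].
Qed.

End Base.
Section Laws.
Variable F : fieldType.
Implicit Types (t A B C : tens F) (x y : word) (a b : F).
Local Notation tz := (tzero F).

Lemma taddC t1 t2 : teq (tadd t1 t2) (tadd t2 t1).
Proof. by move=> x; rewrite !tcoef_add addrC. Qed.
Lemma taddA t1 t2 t3 : tadd t1 (tadd t2 t3) = tadd (tadd t1 t2) t3.
Proof. exact: catA. Qed.
Lemma tadd0r t : tadd t tz = t.
Proof. exact: cats0. Qed.
Lemma tadd0l t : tadd tz t = t.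
Proof. by []. Qed.
Lemma tscaleA a b t : teq (tscale a (tscale b t)) (tscale (a * b) t).
Proof. by move=> x; rewrite !tcoef_scale mulrA. Qed.
Lemma tscaleDr a t1 t2 : tscale a (tadd t1 t2) = tadd (tscale a t1) (tscale a t2).
Proof. exact: map_cat. Qed.
Lemma tscaleDr' a t1 t2 : teq (tscale a (tadd t1 t2)) (tadd (tscale a t1) (tscale a t2)).
Proof. by rewrite tscaleDr. Qed.
Lemma tscaleDl a b t : teq (tscale (a + b) t) (tadd (tscale a t) (tscale b t)).
Proof. by move=> x; rewrite !tcoef_add !tcoef_scale mulrDl. Qed.
Lemma tscale1 t : teq (tscale 1 t) t.
Proof. by move=> x; rewrite !tcoef_scale mul1r. Qed.
Lemma tscale0 t : teq (tscale 0 t) tz.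
Proof. by move=> x; rewrite tcoef_scale mul0r tcoef_nil. Qed.
Lemma tscalez a : tscale a tz = tz.
Proof. by []. Qed.
Lemma tmulDl A B C : tmul (tadd A B) C = tadd (tmul A C) (tmul B C).
Proof. exact: allpairs_cat. Qed.
Lemma tmulDl' A B C : teq (tmul (tadd A B) C) (tadd (tmul A C) (tmul B C)).
Proof. by rewrite tmulDl. Qed.
Lemma tmulDr A B C : teq (tmul A (tadd B C)) (tadd (tmul A B) (tmul A C)).
Proof.
move=> x; rewrite tcoef_add !tcoef_tmul -big_split /=; apply: eq_bigr => p _.
by rewrite big_cat.
Qed.
Lemma tmulZl a A B : teq (tmul (tscale a A) B) (tscale a (tmul A B)).
Proof.
move=> x; rewrite tcoef_scale !tcoef_tmul big_map mulr_sumr; apply: eq_bigr => p _.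
rewrite mulr_sumr; apply: eq_bigr => r _ /=; case: ifP; rewrite ?mulr0 //.
by rewrite mulrA.
Qed.
Lemma tmulZr a A B : teq (tmul A (tscale a B)) (tscale a (tmul A B)).
Proof.
move=> x; rewrite tcoef_scale !tcoef_tmul mulr_sumr; apply: eq_bigr => p _.
rewrite big_map mulr_sumr; apply: eq_bigr => r _ /=; case: ifP; rewrite ?mulr0 //.
by rewrite mulrCA.
Qed.
Lemma tmulA A B C : teq (tmul (tmul A B) C) (tmul A (tmul B C)).
Proof.
move=> x; rewrite !tcoef_tmul /tmul big_allpairs_dep; apply: eq_bigr => p _.
rewrite big_allpairs_dep; apply: eq_bigr => r _; apply: eq_bigr => s _ /=.
by rewrite catA mulrA.
Qed.
Lemma tmul1l t : teq (tmul (tone F) t) t.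
Proof.
move=> x; rewrite tcoef_tmul big_cons big_nil addr0 tcoefE; apply: eq_bigr => r _ /=.
by rewrite mul1r.
Qed.
Lemma tmul1r t : teq (tmul t (tone F)) t.
Proof.
move=> x; rewrite tcoef_tmul tcoefE; apply: eq_bigr => p _ /=.
by rewrite big_cons big_nil addr0 cats0 mulr1.
Qed.
Lemma tmul0l t : tmul tz t = tz.
Proof. by []. Qed.
Lemma tmul0r t : teq (tmul t tz) tz.
Proof.
move=> x; rewrite tcoef_tmul tcoef_nil big1 // => p _; by rewrite big_nil.
Qed.
Lemma tmul_word x y : teq (tmul (tword F x) (tword F y)) (tword F (x ++ y)).
Proof.
move=> z; rewrite tcoef_tmul tcoef_word !big_cons !big_nil /= !addr0 mulr1 //.
Qed.
Lemma tsubE t1 t2 : tsub t1 t2 = tadd t1 (tscale (-1) t2).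
Proof. by []. Qed.
Lemma tsingle (p : F * word) : teq [:: p] (tscale p.1 (tword F p.2)).
Proof. by move=> x; rewrite tcoef_scale tcoef_word tcoef_cons tcoef_nil' addr0; case: ifP; rewrite ?mulr1 ?mulr0. Qed.

End Laws.
Opaque teq.
Tactic Notation "sr" constr(a) := setoid_rewrite a.
Tactic Notation "sr" "<-" constr(a) := setoid_rewrite <- a.

Section Lin.
Variable F : fieldType.
Implicit Types (t A B C : tens F) (x y : word) (a b : F).
Local Notation tz := (tzero F).

Definition tlinear (L : tens F -> tens F) :=
  [/\ Proper (@teq F ==> @teq F) L,
      forall t1 t2, teq (L (tadd t1 t2)) (tadd (L t1) (L t2)) &
      forall a t, teq (L (tscale a t)) (tscale a (L t))].

Lemma lin_zero L : tlinear L -> teq (L tz) tz.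
Proof.
case=> Lp _ Ls; have -> : tz = tscale 0 tz by [].
sr Ls; sr tscale0; reflexivity.
Qed.

Lemma tdecomp t : teq t (flatten (map (fun p => tscale p.1 (tword F p.2)) t)).
Proof.
elim: t => [|p t IH]; first reflexivity.
change (teq ([:: p] ++ t) (tscale p.1 (tword F p.2) ++ flatten (map (fun p => tscale p.1 (tword F p.2)) t))).
sr <- IH; sr (tsingle p); reflexivity.
Qed.

Lemma lin_flatten L (T : Type) (f : T -> tens F) (l : seq T) : tlinear L ->
  teq (L (flatten (map f l))) (flatten (map (fun z => L (f z)) l)).
Proof.
move=> hL; elim: l => [|z l IH] /=; first exact: lin_zero.
case: hL => _ La _; rewrite -[f z ++ _]/(tadd _ _); sr La; sr IH; reflexivity.
Qed.

Lemma flatten_teq (T : Type) (f g : T -> tens F) l :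
  (forall z, teq (f z) (g z)) -> teq (flatten (map f l)) (flatten (map g l)).
Proof.
move=> e; elim: l => [|z l IH] /=; first reflexivity.
by sr (e z); sr IH; reflexivity.
Qed.
Lemma pred_flatten (P : tens F -> Prop) (T : Type) (f : T -> tens F) l :
  P tz -> (forall t1 t2, P t1 -> P t2 -> P (tadd t1 t2)) ->
  (forall z, P (f z)) -> P (flatten (map f l)).
Proof. by move=> P0 Pa Pf; elim: l => [|z l IH] //=; apply: Pa. Qed.

Lemma lin_ext L1 L2 : tlinear L1 -> tlinear L2 ->
  (forall x, teq (L1 (tword F x)) (L2 (tword F x))) -> forall t, teq (L1 t) (L2 t).
Proof.
move=> h1 h2 hw t; have [P1 _ S1] := h1; have [P2 _ S2] := h2.
sr (tdecomp t).
sr (@lin_flatten L1 _ (fun p : F * word => tscale p.1 (tword F p.2)) t h1).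
sr (@lin_flatten L2 _ (fun p : F * word => tscale p.1 (tword F p.2)) t h2).
apply: flatten_teq => p; sr S1; sr S2; sr hw; reflexivity.
Qed.

Lemma lin_pred (P : tens F -> Prop) L :
  Proper (@teq F ==> iff) P -> P tz -> (forall t1 t2, P t1 -> P t2 -> P (tadd t1 t2)) ->
  (forall a t, P t -> P (tscale a t)) -> tlinear L ->
  (forall x, P (L (tword F x))) -> forall t, P (L t).
Proof.
move=> PP P0 Pa Ps hL hw t; have [LP _ S1] := hL.
sr (tdecomp t).
sr (@lin_flatten L _ (fun p : F * word => tscale p.1 (tword F p.2)) t hL).
apply: pred_flatten => // p; sr S1; exact: Ps.
Qed.

Lemma lin_teq L L' : tlinear L -> (forall t, teq (L' t) (L t)) -> tlinear L'.
Proof.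
move=> [LP La Ls] e; split.
- by move=> t t' et; repeat sr e; sr et; reflexivity.
- by move=> t1 t2; repeat sr e; sr La; reflexivity.
- by move=> a t; repeat sr e; sr Ls; reflexivity.
Qed.

Lemma lin_comp L1 L2 : tlinear L1 -> tlinear L2 -> tlinear (fun t => L1 (L2 t)).
Proof.
move=> [P1 A1 S1] [P2 A2 S2]; split.
- by move=> t t' e; sr e; reflexivity.
- by move=> t1 t2; sr A2; sr A1; reflexivity.
- by move=> a t; sr S2; sr S1; reflexivity.
Qed.
Lemma lin_add L1 L2 : tlinear L1 -> tlinear L2 -> tlinear (fun t => tadd (L1 t) (L2 t)).
Proof.
move=> [P1 A1 S1] [P2 A2 S2]; split.
- by move=> t t' e; sr e; reflexivity.
- move=> t1 t2; sr A1; sr A2; rewrite -!taddA; apply: tadd_proper; first reflexivity.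
  by rewrite !taddA; apply: tadd_proper; [exact: taddC|reflexivity].
- by move=> a t; sr S1; sr S2; rewrite tscaleDr; reflexivity.
Qed.
Lemma lin_scale a L : tlinear L -> tlinear (fun t => tscale a (L t)).
Proof.
move=> [P1 A1 S1]; split.
- by move=> t t' e; sr e; reflexivity.
- by move=> t1 t2; sr A1; rewrite tscaleDr; reflexivity.
- by move=> b t; sr S1; sr tscaleA; rewrite mulrC; reflexivity.
Qed.
Lemma lin_mull C : tlinear (fun t => tmul C t).
Proof.
split.
- by move=> t t' e; sr e; reflexivity.
- by move=> t1 t2; sr tmulDr; reflexivity.
- by move=> b t; sr tmulZr; reflexivity.
Qed.
Lemma lin_mulr C : tlinear (fun t => tmul t C).
Proof.
split.
- by move=> t t' e; sr e; reflexivity.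
- by move=> t1 t2; rewrite tmulDl; reflexivity.
- by move=> b t; sr tmulZl; reflexivity.
Qed.

Lemma lin_mulr_comp L C : tlinear L -> tlinear (fun t => tmul (L t) C).
Proof. exact: (lin_comp (lin_mulr C)). Qed.
Lemma lin_mull_comp C L : tlinear L -> tlinear (fun t => tmul C (L t)).
Proof. exact: (lin_comp (lin_mull C)). Qed.

Definition lin_of (phi : word -> tens F) (t : tens F) : tens F :=
  flatten [seq tscale p.1 (phi p.2) | p <- t].

Lemma tcoef_lin_of phi t x : tcoef (lin_of phi t) x = \sum_(p <- t) p.1 * tcoef (phi p.2) x.
Proof. by rewrite tcoef_flatten; apply: eq_bigr => p _; rewrite tcoef_scale. Qed.

Lemma lin_lin_of phi : tlinear (lin_of phi).
Proof.
split.
- move=> t t' e x; rewrite !tcoef_lin_of; exact: (lsum_teq (fun y => tcoef (phi y) x) e).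
- by move=> t1 t2; rewrite /lin_of /tadd map_cat flatten_cat; reflexivity.
- move=> a t x; rewrite tcoef_scale !tcoef_lin_of big_map mulr_sumr.
  by apply: eq_bigr => p _ /=; rewrite mulrA.
Qed.

Lemma lin_of_word phi x : teq (lin_of phi (tword F x)) (phi x).
Proof. rewrite /lin_of /= cats0; exact: tscale1. Qed.

End Lin.
Opaque tmul tscale tadd tword tlet.
Section Act.
Variable F : fieldType.
Variable q : F.
Implicit Types (t A B C : tens F) (x y : word) (a b : F).
Local Notation tz := (tzero F).

Lemma epw_cat x y : epw q (x ++ y) = epw q x * epw q y.
Proof. by rewrite /epw big_cat. Qed.
Lemma emw_cat x y : emw q (x ++ y) = emw q x * emw q y.
Proof. by rewrite /emw big_cat. Qed.
Lemma epw_cons i x : epw q (i :: x) = ep q i * epw q x.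
Proof. by rewrite /epw big_cons. Qed.
Lemma emw_cons i x : emw q (i :: x) = em q i * emw q x.
Proof. by rewrite /emw big_cons. Qed.
Lemma epw_nil : epw q [::] = 1.
Proof. by rewrite /epw big_nil. Qed.
Lemma emw_nil : emw q [::] = 1.
Proof. by rewrite /emw big_nil. Qed.

Lemma Xword_cons i s : Xword q (i :: s) = tadd (tscale (em q i) (tmul (tlet F i) (Xword q s)))
                   (tscale (epw q s) (tmul (Xlet q i) (tword F s))).
Proof. by []. Qed.
Lemma Yword_cons i s : Yword q (i :: s) = tadd (tscale (em q i) (tmul (tlet F i) (Yword q s)))
                   (tscale (epw q s) (tmul (Ylet q i) (tword F s))).
Proof. by []. Qed.
Lemma tlet_word i x : teq (tmul (tlet F i) (tword F x)) (tword F (i :: x)).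
Proof. exact: tmul_word. Qed.

Definition Zword_gen (Zlet : 'I_3 -> tens F) := fix Zw (x : word) : tens F :=
  match x with
  | [::] => tz
  | i :: s => tadd (tscale (em q i) (tmul (tlet F i) (Zw s)))
                   (tscale (epw q s) (tmul (Zlet i) (tword F s)))
  end.

Lemma Zword_cat Zlet x y : teq (Zword_gen Zlet (x ++ y))
  (tadd (tscale (emw q x) (tmul (tword F x) (Zword_gen Zlet y)))
        (tscale (epw q y) (tmul (Zword_gen Zlet x) (tword F y)))).
Proof.
elim: x => [|i x IH].
  rewrite cat0s emw_nil tmul0l tscalez tadd0r; sr tscale1.
  change (tword F [::]) with (tone F); sr tmul1l; reflexivity.
rewrite cat_cons.
change (Zword_gen Zlet (i :: x ++ y)) with (tadd (tscale (em q i) (tmul (tlet F i) (Zword_gen Zlet (x ++ y))))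
                   (tscale (epw q (x ++ y)) (tmul (Zlet i) (tword F (x ++ y))))).
change (Zword_gen Zlet (i :: x)) with (tadd (tscale (em q i) (tmul (tlet F i) (Zword_gen Zlet x)))
                   (tscale (epw q x) (tmul (Zlet i) (tword F x)))).
sr IH; sr (tmulDr (tlet F i)); rewrite (tmulDl (tscale (em q i) _)); sr tmulZr; sr tmulZl; sr (tscaleDr' (em q i)); sr (tscaleDr' (epw q y)); sr tscaleA.
rewrite -taddA; apply: tadd_proper.
  sr <- tmulA; sr tlet_word; rewrite emw_cons; reflexivity.
sr tmulA; apply: tadd_proper.
  rewrite mulrC; reflexivity.
sr tmul_word; rewrite epw_cat mulrC; reflexivity.
Qed.

Lemma Xword_gen x : Xword q x = Zword_gen (Xlet q) x.
Proof. by elim: x => [|i x IH] //=; rewrite IH. Qed.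
Lemma Yword_gen x : Yword q x = Zword_gen (Ylet q) x.
Proof. by elim: x => [|i x IH] //=; rewrite IH. Qed.

Lemma lin_X : tlinear (actX q).
Proof. exact: lin_lin_of. Qed.
Lemma lin_Y : tlinear (actY q).
Proof. exact: lin_lin_of. Qed.

Lemma actEp_lin t : teq (actEp q t) (lin_of (fun y => tscale (epw q y) (tword F y)) t).
Proof.
move=> x; rewrite tcoef_lin_of tcoefE big_map; apply: eq_bigr => p _ /=.
rewrite tcoef_scale tcoef_word; case: eqP => _; by rewrite ?mulr0 ?mulr1.
Qed.
Lemma actEm_lin t : teq (actEm q t) (lin_of (fun y => tscale (emw q y) (tword F y)) t).
Proof.
move=> x; rewrite tcoef_lin_of tcoefE big_map; apply: eq_bigr => p _ /=.
rewrite tcoef_scale tcoef_word; case: eqP => _; by rewrite ?mulr0 ?mulr1.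
Qed.
Lemma lin_Ep : tlinear (actEp q).
Proof. exact: (lin_teq (lin_lin_of _) actEp_lin). Qed.
Lemma lin_Em : tlinear (actEm q).
Proof. exact: (lin_teq (lin_lin_of _) actEm_lin). Qed.

Lemma actX_word x : teq (actX q (tword F x)) (Xword q x).
Proof. exact: lin_of_word. Qed.
Lemma actY_word x : teq (actY q (tword F x)) (Yword q x).
Proof. exact: lin_of_word. Qed.
Lemma actEp_word x : teq (actEp q (tword F x)) (tscale (epw q x) (tword F x)).
Proof. sr actEp_lin; exact: lin_of_word. Qed.
Lemma actEm_word x : teq (actEm q (tword F x)) (tscale (emw q x) (tword F x)).
Proof. sr actEm_lin; exact: lin_of_word. Qed.

Global Instance actX_proper : Proper (@teq F ==> @teq F) (actX q).
Proof. by case: lin_X. Qed.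
Global Instance actY_proper : Proper (@teq F ==> @teq F) (actY q).
Proof. by case: lin_Y. Qed.
Global Instance actEp_proper : Proper (@teq F ==> @teq F) (actEp q).
Proof. by case: lin_Ep. Qed.
Global Instance actEm_proper : Proper (@teq F ==> @teq F) (actEm q).
Proof. by case: lin_Em. Qed.

Lemma Z_leib (Z : tens F -> tens F) Zlet : tlinear Z ->
  (forall x, teq (Z (tword F x)) (Zword_gen Zlet x)) ->
  forall A B, teq (Z (tmul A B)) (tadd (tmul (actEm q A) (Z B)) (tmul (Z A) (actEp q B))).
Proof.
move=> hZ hw A B.
pose L1 := fun A => Z (tmul A B).
pose L2 := fun A => tadd (tmul (actEm q A) (Z B)) (tmul (Z A) (actEp q B)).
have l1 : tlinear L1 := lin_comp hZ (lin_mulr B).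
have l2 : tlinear L2 := lin_add (lin_mulr_comp _ (lin_Em)) (lin_mulr_comp _ hZ).
apply: (lin_ext l1 l2) => x; rewrite /L1 /L2.
pose M1 := fun B => Z (tmul (tword F x) B).
pose M2 := fun B => tadd (tmul (actEm q (tword F x)) (Z B)) (tmul (Z (tword F x)) (actEp q B)).
have m1 : tlinear M1 := lin_comp hZ (lin_mull _).
have m2 : tlinear M2 := lin_add (lin_mull_comp _ hZ) (lin_mull_comp _ lin_Ep).
apply: (lin_ext m1 m2) => y; rewrite /M1 /M2.
have [ZP _ _] := hZ.
sr tmul_word; sr hw; sr actEm_word; sr actEp_word; sr Zword_cat.
sr tmulZl; sr tmulZr; reflexivity.
Qed.

Lemma X_leib A B : teq (actX q (tmul A B)) (tadd (tmul (actEm q A) (actX q B)) (tmul (actX q A) (actEp q B))).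
Proof. apply: (@Z_leib _ (Xlet q) lin_X) => x; rewrite -Xword_gen; exact: actX_word. Qed.
Lemma Y_leib A B : teq (actY q (tmul A B)) (tadd (tmul (actEm q A) (actY q B)) (tmul (actY q A) (actEp q B))).
Proof. apply: (@Z_leib _ (Ylet q) lin_Y) => x; rewrite -Yword_gen; exact: actY_word. Qed.

Lemma Ep_mul A B : teq (actEp q (tmul A B)) (tmul (actEp q A) (actEp q B)).
Proof.
pose L1 := fun A => actEp q (tmul A B).
pose L2 := fun A => tmul (actEp q A) (actEp q B).
have l1 : tlinear L1 := lin_comp lin_Ep (lin_mulr B).
have l2 : tlinear L2 := lin_mulr_comp _ lin_Ep.
apply: (lin_ext l1 l2) => x; rewrite /L1 /L2.
pose M1 := fun B => actEp q (tmul (tword F x) B).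
pose M2 := fun B => tmul (actEp q (tword F x)) (actEp q B).
have m1 : tlinear M1 := lin_comp lin_Ep (lin_mull _).
have m2 : tlinear M2 := lin_mull_comp _ lin_Ep.
apply: (lin_ext m1 m2) => y; rewrite /M1 /M2.
sr tmul_word; sr actEp_word.
sr tmulZl; sr tmulZr; sr tscaleA; sr tmul_word; rewrite epw_cat mulrC; reflexivity.
Qed.
Lemma Em_mul A B : teq (actEm q (tmul A B)) (tmul (actEm q A) (actEm q B)).
Proof.
pose L1 := fun A => actEm q (tmul A B).
pose L2 := fun A => tmul (actEm q A) (actEm q B).
have l1 : tlinear L1 := lin_comp lin_Em (lin_mulr B).
have l2 : tlinear L2 := lin_mulr_comp _ lin_Em.
apply: (lin_ext l1 l2) => x; rewrite /L1 /L2.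
pose M1 := fun B => actEm q (tmul (tword F x) B).
pose M2 := fun B => tmul (actEm q (tword F x)) (actEm q B).
have m1 : tlinear M1 := lin_comp lin_Em (lin_mull _).
have m2 : tlinear M2 := lin_mull_comp _ lin_Em.
apply: (lin_ext m1 m2) => y; rewrite /M1 /M2.
sr tmul_word; sr actEm_word.
sr tmulZl; sr tmulZr; sr tscaleA; sr tmul_word; rewrite emw_cat mulrC; reflexivity.
Qed.

End Act.
Section Ideal.
Variable F : fieldType.
Variable gs : seq (tens F).
Implicit Types (t A B C : tens F) (x y : word) (a b : F).
Local Notation tz := (tzero F).
Local Notation I := (in_ideal gs).

Definition gen_term (z : F * word * nat * word) : tens F :=
  tscale z.1.1.1 (tmul (tmul (tword F z.1.1.2) (nth tz gs z.1.2)) (tword F z.2)).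

Lemma I_def t : I t <-> exists l, teq t (flatten (map gen_term l)).
Proof. by []. Qed.

Global Instance I_proper : Proper (@teq F ==> iff) I.
Proof.
move=> t t' e; rewrite !I_def; split => -[l h]; exists l.
  by sr <- e.
by sr e.
Qed.

Lemma I_teq t t' : teq t t' -> I t -> I t'.
Proof. by move=> e; rewrite (I_proper e). Qed.

Lemma I0 : I tz.
Proof. by exists [::]; reflexivity. Qed.
Lemma I_add t1 t2 : I t1 -> I t2 -> I (tadd t1 t2).
Proof.
rewrite !I_def => -[l1 h1] [l2 h2]; exists (l1 ++ l2).
rewrite map_cat flatten_cat; sr h1; sr h2; reflexivity.
Qed.
Lemma I_scale a t : I t -> I (tscale a t).
Proof.
rewrite !I_def => -[l h]; exists [seq (a * z.1.1.1, z.1.1.2, z.1.2, z.2) | z <- l].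
sr h; apply: teqP => x; rewrite tcoef_scale !tcoef_flatten big_map mulr_sumr.
apply: eq_bigr => z _; rewrite /gen_term /= !tcoef_scale; exact: mulrA.
Qed.
Lemma I_flatten (T : Type) (f : T -> tens F) l : (forall z, I (f z)) -> I (flatten (map f l)).
Proof. move=> h; apply: pred_flatten => //; [exact: I0|exact: I_add]. Qed.
Lemma I_gen_term z : I (gen_term z).
Proof. exists [:: z]; rewrite /= cats0; reflexivity. Qed.
Lemma I_gen i : I (nth tz gs i).
Proof.
apply: (I_teq _ (I_gen_term ((1 : F), [::], i, [::]))).
rewrite /gen_term /=; sr tscale1; change (tword F [::]) with (tone F).
sr tmul1l; sr tmul1r; reflexivity.
Qed.
Lemma I_sub t1 t2 : I t1 -> I t2 -> I (tsub t1 t2).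
Proof. by move=> h1 h2; apply: I_add => //; apply: I_scale. Qed.

Lemma I_mulr t C : I t -> I (tmul t C).
Proof.
rewrite I_def => -[l h]; sr h.
sr (lin_flatten gen_term l (lin_mulr C)).
apply: I_flatten => z.
apply: (lin_pred (P := I) (L := fun C => tmul (gen_term z) C)).
- exact: I0.
- exact: I_add.
- exact: I_scale.
- exact: lin_mull.
move=> y; apply: (I_teq _ (I_gen_term (z.1.1.1, z.1.1.2, z.1.2, z.2 ++ y))).
rewrite /gen_term /=; sr tmulZl; repeat sr tmulA; sr tmul_word; reflexivity.
Qed.

Lemma I_mull t C : I t -> I (tmul C t).
Proof.
rewrite I_def => -[l h]; sr h.
sr (lin_flatten gen_term l (lin_mull C)).
apply: I_flatten => z.
apply: (lin_pred (P := I) (L := fun C => tmul C (gen_term z))).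
- exact: I0.
- exact: I_add.
- exact: I_scale.
- exact: lin_mulr.
move=> y; apply: (I_teq _ (I_gen_term (z.1.1.1, y ++ z.1.1.2, z.1.2, z.2))).
rewrite /gen_term /=; sr tmulZr; repeat sr tmulA; sr <- (tmulA (tword F y) (tword F z.1.1.2)); sr tmul_word; reflexivity.
Qed.

Section Stab.
Variable q : F.
Lemma Z_stable (Z : tens F -> tens F) :
  tlinear Z ->
  (forall A B, teq (Z (tmul A B)) (tadd (tmul (actEm q A) (Z B)) (tmul (Z A) (actEp q B)))) ->
  (forall i, I (Z (nth tz gs i)) /\ I (actEp q (nth tz gs i)) /\ I (actEm q (nth tz gs i))) ->
  forall t, I t -> I (Z t).
Proof.
move=> hZ hL hg t; rewrite I_def => -[l h].
have [ZP _ ZS] := hZ.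
sr h; sr (lin_flatten gen_term l hZ); apply: I_flatten => z.
rewrite /gen_term; sr ZS; apply: I_scale.
have [g1 [g2 g3]] := hg z.1.2.
sr hL; apply: I_add.
  apply: I_mulr; sr Em_mul; exact: I_mull.
apply: I_mulr; sr hL; apply: I_add; first exact: I_mull.
apply: I_mull; exact: g2.
Qed.
End Stab.

End Ideal.
Transparent tmul tscale tadd tword tlet.
Ltac split_or := match goal with
 | |- is_true (_ || _) -> _ => case/orP; [move/eqP->| split_or]
 | |- is_true (_ == _) -> _ => move/eqP->
 | |- is_true false -> _ => by []
 | |- is_true (_ \in [::]) -> _ => by []
 | |- false -> _ => by []
 end.

Ltac tcheck := apply: teq_check => x;
  unfold gens, tadd, tsub, tscale, tmul, tword, tlet, tone, tzero, actX, actY, actEp, actEm, vtilde, Xlet, Ylet;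
  simpl; rewrite ?inE; split_or; rewrite !tcoef_cons tcoef_nil' /=;
  rewrite ?(epw_cons, epw_nil, emw_cons, emw_nil) /ep /em /aa /=.

Section Conc.
Variable F : fieldType.
Variables q hbar c : F.
Hypothesis hq : q != 0.
Hypothesis hq2 : 1 - q ^+ 2 != 0.
Hypothesis hp : q ^+ 2 + 1 != 0.
Set Default Proof Using "hq hq2 hp".
Local Notation tz := (tzero F).
Local Notation G i := (nth tz (gens q hbar c) i).
Local Notation s := (q + q^-1).
Local Notation u := (tlet F lu).
Local Notation v := (tlet F lv).
Local Notation w := (tlet F lw).
Local Notation vt := (vtilde q hbar).
Local Notation a := (aa q hbar).

Lemma Ep_G0 : teq (actEp q (G 0)) (G 0). Proof. by tcheck; field; rewrite ?hq ?hq2 ?hp. Qed.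
Lemma Ep_G1 : teq (actEp q (G 1)) (tscale q (G 1)). Proof. by tcheck; field; rewrite ?hq ?hq2 ?hp. Qed.
Lemma Ep_G2 : teq (actEp q (G 2)) (G 2). Proof. by tcheck; field; rewrite ?hq ?hq2 ?hp. Qed.
Lemma Ep_G3 : teq (actEp q (G 3)) (tscale q^-1 (G 3)). Proof. by tcheck; field; rewrite ?hq ?hq2 ?hp. Qed.
Lemma Em_G0 : teq (actEm q (G 0)) (G 0). Proof. by tcheck; field; rewrite ?hq ?hq2 ?hp. Qed.
Lemma Em_G1 : teq (actEm q (G 1)) (tscale q^-1 (G 1)). Proof. by tcheck; field; rewrite ?hq ?hq2 ?hp. Qed.
Lemma Em_G2 : teq (actEm q (G 2)) (G 2). Proof. by tcheck; field; rewrite ?hq ?hq2 ?hp. Qed.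
Lemma Em_G3 : teq (actEm q (G 3)) (tscale q (G 3)). Proof. by tcheck; field; rewrite ?hq ?hq2 ?hp. Qed.
Lemma X_G0 : teq (actX q (G 0)) tz. Proof. by tcheck; field; rewrite ?hq ?hq2 ?hp. Qed.
Lemma X_G1 : teq (actX q (G 1)) tz. Proof. by tcheck; field; rewrite ?hq ?hq2 ?hp. Qed.
Lemma X_G2 : teq (actX q (G 2)) (tscale s (G 1)). Proof. by tcheck; field; rewrite ?hq ?hq2 ?hp. Qed.
Lemma X_G3 : teq (actX q (G 3)) (G 2). Proof. by tcheck; field; rewrite ?hq ?hq2 ?hp. Qed.
Lemma Y_G0 : teq (actY q (G 0)) tz. Proof. by tcheck; field; rewrite ?hq ?hq2 ?hp. Qed.
Lemma Y_G1 : teq (actY q (G 1)) (G 2). Proof. by tcheck; field; rewrite ?hq ?hq2 ?hp. Qed.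
Lemma Y_G2 : teq (actY q (G 2)) (tscale s (G 3)). Proof. by tcheck; field; rewrite ?hq ?hq2 ?hp. Qed.
Lemma Y_G3 : teq (actY q (G 3)) tz. Proof. by tcheck; field; rewrite ?hq ?hq2 ?hp. Qed.


Lemma R1_eq : teq (tsub (tmul vt u) (tscale (q ^+ 2) (tmul u vt))) (tscale (-1) (G 1)).
Proof. by tcheck; field; rewrite ?hq ?hq2 ?hp. Qed.
Lemma R2_eq : teq (tsub (tmul vt w) (tscale (q ^-2) (tmul w vt))) (tscale (- q ^-2) (G 3)).
Proof. by tcheck; field; rewrite ?hq ?hq2 ?hp. Qed.
Lemma R3_eq : teq (tsub (tmul u w)
   (tadd (tscale ((q ^+ 2 * c + hbar * a - a ^+ 2) / (q ^+ 2 + 1) ^+ 2) (tone F))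
   (tadd (tscale ((hbar - 2 * a) / (q ^+ 2 + 1) ^+ 2) vt)
         (tscale (- 1 / (q ^+ 2 + 1) ^+ 2) (tmul vt vt)))))
  (tadd (tscale (q ^+ 2 / (q ^+ 2 + 1) ^+ 2) (G 0)) (tscale (1 / (q ^+ 2 + 1) ^+ 2) (G 2))).
Proof. by tcheck; field; rewrite ?hq ?hq2 ?hp. Qed.
Lemma R4_eq : teq (tsub (tmul w u)
   (tadd (tscale (q ^+ 2 * (c - hbar * a - q ^+ 2 * a ^+ 2) / (q ^+ 2 + 1) ^+ 2) (tone F))
   (tadd (tscale (q ^+ 2 * (- hbar - 2 * q ^+ 2 * a) / (q ^+ 2 + 1) ^+ 2) vt)
         (tscale (- q ^+ 4 / (q ^+ 2 + 1) ^+ 2) (tmul vt vt)))))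
  (tadd (tscale (q ^+ 2 / (q ^+ 2 + 1) ^+ 2) (G 0)) (tscale (- q ^+ 2 / (q ^+ 2 + 1) ^+ 2) (G 2))).
Proof. by tcheck; field; rewrite ?hq ?hq2 ?hp. Qed.

Lemma Y_vt : teq (actY q vt) (tscale s w). Proof. by tcheck; field; rewrite ?hq ?hq2 ?hp. Qed.
Lemma X_vt : teq (actX q vt) (tscale (- s) u). Proof. by tcheck; field; rewrite ?hq ?hq2 ?hp. Qed.
Lemma Ep_vt : teq (actEp q vt) vt. Proof. by tcheck; field; rewrite ?hq ?hq2 ?hp. Qed.
Lemma Em_vt : teq (actEm q vt) vt. Proof. by tcheck; field; rewrite ?hq ?hq2 ?hp. Qed.
Lemma X_one : teq (actX q (tone F)) tz. Proof. by tcheck; field; rewrite ?hq ?hq2 ?hp. Qed.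
Lemma Y_one : teq (actY q (tone F)) tz. Proof. by tcheck; field; rewrite ?hq ?hq2 ?hp. Qed.
Lemma Ep_one : teq (actEp q (tone F)) (tone F). Proof. by tcheck; field; rewrite ?hq ?hq2 ?hp. Qed.
Lemma Em_one : teq (actEm q (tone F)) (tone F). Proof. by tcheck; field; rewrite ?hq ?hq2 ?hp. Qed.
Lemma X_w : teq (actX q w) v. Proof. by tcheck; field; rewrite ?hq ?hq2 ?hp. Qed.
Lemma Em_w : teq (actEm q w) (tscale q w). Proof. by tcheck; field; rewrite ?hq ?hq2 ?hp. Qed.
Lemma Y_u : teq (actY q u) (tscale (-1) v). Proof. by tcheck; field; rewrite ?hq ?hq2 ?hp. Qed.
Lemma Em_u : teq (actEm q u) (tscale q^-1 u). Proof. by tcheck; field; rewrite ?hq ?hq2 ?hp. Qed.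
Lemma v_vt : teq v (tadd vt (tscale a (tone F))). Proof. by tcheck; field; rewrite ?hq ?hq2 ?hp. Qed.

Unset Default Proof Using.
End Conc.
Opaque tmul tscale tadd tword tlet.

Section AeqS.
Variable F : fieldType.
Variables q hbar c : F.
Hypothesis hq : q != 0.
Hypothesis hq2 : 1 - q ^+ 2 != 0.
Hypothesis hp : q ^+ 2 + 1 != 0.
Local Notation tz := (tzero F).
Local Notation G i := (nth tz (gens q hbar c) i).
Local Notation I := (in_ideal (gens q hbar c)).
Implicit Types (t A B C : tens F) (x y : word) (k : F).

Lemma gens_good i : I (actX q (G i)) /\ I (actY q (G i)) /\ I (actEp q (G i)) /\ I (actEm q (G i)).
Proof.
case: i => [|[|[|[|i]]]].
- split; first by sr (@X_G0 F q hbar c hq hq2 hp); exact: I0.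
  split; first by sr (@Y_G0 F q hbar c hq hq2 hp); exact: I0.
  split; first by sr (@Ep_G0 F q hbar c hq hq2 hp); exact: I_gen.
  by sr (@Em_G0 F q hbar c hq hq2 hp); exact: I_gen.
- split; first by sr (@X_G1 F q hbar c hq hq2 hp); exact: I0.
  split; first by sr (@Y_G1 F q hbar c hq hq2 hp); exact: I_gen.
  split; first by sr (@Ep_G1 F q hbar c hq hq2 hp) => //; apply: I_scale; exact: I_gen.
  by sr (@Em_G1 F q hbar c hq hq2 hp) => //; apply: I_scale; exact: I_gen.
- split; first by sr (@X_G2 F q hbar c hq hq2 hp); apply: I_scale; exact: I_gen.
  split; first by sr (@Y_G2 F q hbar c hq hq2 hp); apply: I_scale; exact: I_gen.
  split; first by sr (@Ep_G2 F q hbar c hq hq2 hp); exact: I_gen.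
  by sr (@Em_G2 F q hbar c hq hq2 hp); exact: I_gen.
- split; first by sr (@X_G3 F q hbar c hq hq2 hp); exact: I_gen.
  split; first by sr (@Y_G3 F q hbar c hq hq2 hp); exact: I0.
  split; first by sr (@Ep_G3 F q hbar c hq hq2 hp) => //; apply: I_scale; exact: I_gen.
  by sr (@Em_G3 F q hbar c hq hq2 hp) => //; apply: I_scale; exact: I_gen.
have -> : G i.+4 = tz by rewrite nth_default.
split; first by sr (lin_zero (lin_X q)); exact: I0.
split; first by sr (lin_zero (lin_Y q)); exact: I0.
split; first by sr (lin_zero (lin_Ep q)); exact: I0.
by sr (lin_zero (lin_Em q)); exact: I0.
Qed.

Lemma X_stable t : I t -> I (actX q t).
Proof.
apply: (Z_stable (lin_X q) (@X_leib F q)) => i.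
by have [h1 [h2 [h3 h4]]] := gens_good i.
Qed.
Lemma Y_stable t : I t -> I (actY q t).
Proof.
apply: (Z_stable (lin_Y q) (@Y_leib F q)) => i.
by have [h1 [h2 [h3 h4]]] := gens_good i.
Qed.

Local Notation AE := (Aeq q hbar c).

Lemma AeqE t1 t2 : AE t1 t2 <-> I (tsub t1 t2).
Proof. by []. Qed.

Global Instance Aeq_equiv : Equivalence AE.
Proof.
constructor.
- move=> t; rewrite AeqE; apply: (I_teq _ (I0 _)); apply: teqP => x.
  by rewrite tcoef_nil tcoef_sub subrr.
- move=> t1 t2; rewrite !AeqE => h; apply: (I_teq _ (I_scale (-1) h)); apply: teqP => x.
  by rewrite !(tcoef_sub, tcoef_add, tcoef_scale); ring.
- move=> t1 t2 t3; rewrite !AeqE => h1 h2; apply: (I_teq _ (I_add h1 h2)); apply: teqP => x.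
  by rewrite !(tcoef_sub, tcoef_add, tcoef_scale); ring.
Qed.

Global Instance Aeq_teq : Proper (@teq F ==> @teq F ==> iff) AE.
Proof. by move=> a a' ea b b' eb; rewrite !AeqE; sr ea; sr eb. Qed.

Lemma teq_Aeq t t' : teq t t' -> AE t t'.
Proof. by move=> e; sr e; reflexivity. Qed.

Global Instance Aeq_tadd : Proper (AE ==> AE ==> AE) (@tadd F).
Proof.
move=> a a' ea b b' eb; rewrite AeqE; apply: (I_teq _ (I_add ea eb)); apply: teqP => x.
by rewrite !(tcoef_sub, tcoef_add, tcoef_scale); ring.
Qed.
Global Instance Aeq_tscale : Proper (eq ==> AE ==> AE) (@tscale F).
Proof.
move=> k k' <- a a' ea; rewrite AeqE; apply: (I_teq _ (I_scale k ea)); apply: teqP => x.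
by rewrite !(tcoef_sub, tcoef_add, tcoef_scale); ring.
Qed.
Global Instance Aeq_tsub : Proper (AE ==> AE ==> AE) (@tsub F).
Proof. by move=> a a' ea b b' eb; rewrite /tsub; sr ea; sr eb; reflexivity. Qed.
Global Instance Aeq_tmul : Proper (AE ==> AE ==> AE) (@tmul F).
Proof.
move=> a a' ea b b' eb; rewrite AeqE.
apply: (I_teq _ (I_add (I_mulr b ea) (I_mull a' eb))).
rewrite /tsub; sr tmulDl'; sr tmulDr; sr tmulZl; sr tmulZr.
apply: teqP => x; rewrite !(tcoef_sub, tcoef_add, tcoef_scale); ring.
Qed.
Global Instance Aeq_actX : Proper (AE ==> AE) (actX q).
Proof.
move=> a a' ea; rewrite AeqE; apply: (I_teq _ (X_stable ea)).
have [_ La Ls] := lin_X q; rewrite /tsub; sr La; sr Ls; reflexivity.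
Qed.
Global Instance Aeq_actY : Proper (AE ==> AE) (actY q).
Proof.
move=> a a' ea; rewrite AeqE; apply: (I_teq _ (Y_stable ea)).
have [_ La Ls] := lin_Y q; rewrite /tsub; sr La; sr Ls; reflexivity.
Qed.

End AeqS.

Opaque teq tmul tscale tadd tword tlet vtilde tpow.
Section Main.
Variable F : fieldType.
Variables q hbar c : F.
Hypothesis hq : q != 0.
Hypothesis hq2 : 1 - q ^+ 2 != 0.
Hypothesis hp : q ^+ 2 + 1 != 0.
Hypothesis h2 : (2 : F) != 0.
Local Notation tz := (tzero F).
Local Notation G i := (nth tz (gens q hbar c) i).
Local Notation I := (in_ideal (gens q hbar c)).
Local Notation AE := (Aeq q hbar c).
Local Notation s := (q + q^-1).
Local Notation u := (tlet F lu).
Local Notation v := (tlet F lv).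
Local Notation w := (tlet F lw).
Local Notation vt := (vtilde q hbar).
Local Notation a := (aa q hbar).
Local Notation V n := (tpow vt n).
Implicit Types (t A B C : tens F) (x y : word) (k : F).

Local Instance AX : Proper (AE ==> AE) (actX q) := @Aeq_actX F q hbar c hq hq2 hp.
Local Instance AY : Proper (AE ==> AE) (actY q) := @Aeq_actY F q hbar c hq hq2 hp.
Let Ep_vt := Ep_vt hbar hq hq2 hp.
Let Em_vt := Em_vt hbar hq hq2 hp.
Let Y_vt := Y_vt hbar hq hq2 hp.
Let X_vt := X_vt hbar hq hq2 hp.
Let v_vt := v_vt hbar hq hq2 hp.
Let X_one := X_one hq hq2 hp.
Let Y_one := Y_one hq hq2 hp.
Let Ep_one := Ep_one hq hq2 hp.
Let Em_one := Em_one hq hq2 hp.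
Let X_w := X_w hq hq2 hp.
Let Y_u := Y_u hq hq2 hp.
Let Em_w := Em_w hq hq2 hp.
Let Em_u := Em_u hq hq2 hp.

Definition P n := \sum_(i < n) (q ^+ 2) ^+ i.
Definition Pp n := \sum_(i < n) (q ^-2) ^+ i.

Lemma Pp_S n : Pp n.+1 = 1 + q ^-2 * Pp n.
Proof.
rewrite /Pp big_ord_recl expr0 mulr_sumr; congr (_ + _); apply: eq_bigr => i _.
by rewrite lift0 exprS.
Qed.
Lemma P_S n : P n.+1 = 1 + q ^+ 2 * P n.
Proof.
rewrite /P big_ord_recl expr0 mulr_sumr; congr (_ + _); apply: eq_bigr => i _.
by rewrite lift0 exprS.
Qed.

Lemma VS n : V n.+1 = tmul vt (V n).
Proof. by []. Qed.

Lemma Ep_V n : teq (actEp q (V n)) (V n).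
Proof.
elim: n => [|n IH]; first exact: Ep_one.
rewrite VS; sr Ep_mul; sr IH; sr Ep_vt; reflexivity.
Qed.
Lemma Em_V n : teq (actEm q (V n)) (V n).
Proof.
elim: n => [|n IH]; first exact: Em_one.
rewrite VS; sr Em_mul; sr IH; sr Em_vt; reflexivity.
Qed.

Lemma R1 : AE (tmul vt u) (tscale (q ^+ 2) (tmul u vt)).
Proof.
rewrite AeqE; sr (R1_eq hbar c hq hq2 hp); apply: I_scale; exact: I_gen.
Qed.
Lemma R2 : AE (tmul vt w) (tscale (q ^-2) (tmul w vt)).
Proof.
rewrite AeqE; sr (R2_eq hbar c hq hq2 hp); apply: I_scale; exact: I_gen.
Qed.

Lemma Y_V n : AE (actY q (V n.+1)) (tscale (s * Pp n.+1) (tmul w (V n))).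
Proof.
elim: n => [|n IH].
  apply: teq_Aeq; rewrite VS; sr Y_leib; sr Y_one; sr Ep_one; try sr tmul0r; sr Y_vt.
  rewrite tadd0l; sr tmulZl; rewrite /Pp big_ord1 expr0 mulr1; reflexivity.
rewrite VS; sr Y_leib; sr Em_vt; sr Ep_V; sr Y_vt; sr IH; sr tmulZr; sr tmulZl.
sr <- (tmulA vt w (V n)); sr R2; sr tmulZl; sr (tmulA w vt (V n)); sr tscaleA.
sr <- tscaleDl; apply: teq_Aeq; apply: tscale_proper; last reflexivity.
rewrite (Pp_S n.+1); field; exact: hq.
Qed.


Lemma X_V n : AE (actX q (V n.+1)) (tscale (- s * P n.+1) (tmul u (V n))).
Proof.
elim: n => [|n IH].
  apply: teq_Aeq; rewrite VS; sr X_leib; sr X_one; sr Ep_one; try sr tmul0r; sr X_vt.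
  rewrite tadd0l; sr tmulZl; rewrite /P big_ord1 expr0 mulr1; reflexivity.
rewrite VS; sr X_leib; sr Em_vt; sr Ep_V; sr X_vt; sr IH; sr tmulZr; sr tmulZl.
sr <- (tmulA vt u (V n)); sr R1; sr tmulZl; sr (tmulA u vt (V n)); sr tscaleA.
sr <- tscaleDl; apply: teq_Aeq; apply: tscale_proper; last reflexivity.
rewrite (P_S n.+1); ring.
Qed.

Lemma XY_V n : AE (actX q (actY q (V n.+1)))
  (tscale (s * Pp n.+1) (tadd (tscale q (tmul w (actX q (V n)))) (tmul v (V n)))).
Proof.
have [_ _ XS] := lin_X q.
sr (Y_V n); sr XS; sr X_leib; sr Em_w; sr X_w; sr Ep_V; sr tmulZl; reflexivity.
Qed.

Lemma YX_V n : AE (actY q (actX q (V n.+1)))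
  (tscale (- s * P n.+1) (tadd (tscale q^-1 (tmul u (actY q (V n)))) (tscale (-1) (tmul v (V n))))).
Proof.
have [_ _ YS] := lin_Y q.
sr (X_V n); sr YS; sr Y_leib; sr Em_u; sr Y_u; sr Ep_V; sr tmulZl; reflexivity.
Qed.

Lemma E_part n k : teq (tscale k (tadd (tadd (actEp q (actEp q (V n))) (actEm q (actEm q (V n))))
   (tscale (-2) (V n)))) tz.
Proof.
sr Ep_V; sr Ep_V; sr Em_V; sr Em_V.
move: (V n) => X; apply: teqP => x; rewrite !(tcoef_add, tcoef_scale) tcoef_nil; ring.
Qed.

Lemma vV n : teq (tmul v (V n)) (tadd (V n.+1) (tscale a (V n))).
Proof. sr v_vt; sr tmulDl'; sr tmulZl; sr tmul1l; reflexivity. Qed.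


Definition lc3 (c0 c1 c2 : F) (X0 X1 X2 : tens F) :=
  tadd (tscale c0 X0) (tadd (tscale c1 X1) (tscale c2 X2)).

Let pp := (q ^+ 2 + 1) ^+ 2.
Definition au0 := (q ^+ 2 * c + hbar * a - a ^+ 2) / pp.
Definition au1 := (hbar - 2 * a) / pp.
Definition au2 := - 1 / pp.
Definition aw0 := q ^+ 2 * (c - hbar * a - q ^+ 2 * a ^+ 2) / pp.
Definition aw1 := q ^+ 2 * (- hbar - 2 * q ^+ 2 * a) / pp.
Definition aw2 := - q ^+ 4 / pp.

Lemma uwV m : AE (tmul (tmul u w) (V m)) (lc3 au0 au1 au2 (V m) (V m.+1) (V m.+2)).
Proof.
have R3 : AE (tmul u w) (tadd (tscale au0 (tone F)) (tadd (tscale au1 vt) (tscale au2 (tmul vt vt)))).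
  rewrite AeqE /au0 /au1 /au2 /pp; sr (R3_eq hbar c hq hq2 hp); apply: I_add; apply: I_scale; exact: I_gen.
sr R3; apply: teq_Aeq; sr tmulDl'; sr tmulDl'; sr tmulZl; sr tmul1l; sr (tmulA vt vt (V m)).
rewrite -!VS; reflexivity.
Qed.

Lemma wuV m : AE (tmul (tmul w u) (V m)) (lc3 aw0 aw1 aw2 (V m) (V m.+1) (V m.+2)).
Proof.
have R4 : AE (tmul w u) (tadd (tscale aw0 (tone F)) (tadd (tscale aw1 vt) (tscale aw2 (tmul vt vt)))).
  rewrite AeqE /aw0 /aw1 /aw2 /pp; sr (R4_eq hbar c hq hq2 hp); apply: I_add; apply: I_scale; exact: I_gen.
sr R4; apply: teq_Aeq; sr tmulDl'; sr tmulDl'; sr tmulZl; sr tmul1l; sr (tmulA vt vt (V m)).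
rewrite -!VS; reflexivity.
Qed.


Lemma hq21 : q ^+ 2 - 1 != 0.
Proof. by rewrite -opprB oppr_eq0. Qed.
Lemma hqm21 : q ^- 2 - 1 != 0.
Proof.
rewrite subr_eq0 invr_eq1; apply/negP => /eqP e; move: hq2; by rewrite e subrr eqxx.
Qed.
Lemma P_cl n : P n = ((q ^+ 2) ^+ n - 1) / (q ^+ 2 - 1).
Proof. by rewrite subrX1 mulrAC divff ?mul1r // hq21. Qed.
Lemma Pp_cl n : Pp n = ((q ^- 2) ^+ n - 1) / (q ^- 2 - 1).
Proof. by rewrite subrX1 mulrAC divff ?mul1r // hqm21. Qed.

Lemma pz (n : nat) : q ^ (2 * n%:Z) = (q ^+ 2) ^+ n.
Proof. by rewrite -exprz_exp -!exprnP. Qed.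
Lemma pz1 (n : nat) : q != 0 -> q ^ (2 * n%:Z - 1) = (q ^+ 2) ^+ n / q.
Proof. move=> hq'; rewrite expfzDr // pz. by rewrite -[(-1)%R]/(Negz 0) /exprz expr1. Qed.

Lemma main2 m : AE (actK q (vtpow q hbar (m.+2)%:Z)) (rhs q hbar c m.+2).
Proof.
rewrite /actK /rhs.
have e1 : (m.+2)%:Z - 1 = (m.+1)%:Z by rewrite -addn1 PoszD addrK.
have e2 : (m.+2)%:Z - 2 = m%:Z by rewrite -addn2 PoszD addrK.
rewrite e1 e2.
change (vtpow q hbar (m.+2)%:Z) with (V m.+2).
change (vtpow q hbar (m.+1)%:Z) with (V m.+1).
change (vtpow q hbar m%:Z) with (V m).
sr E_part; rewrite tadd0r.
sr (XY_V m.+1); sr (YX_V m.+1); sr (X_V m); sr (Y_V m).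
sr tmulZr; sr <- (tmulA w u (V m)); sr <- (tmulA u w (V m)); sr (wuV m); sr (uwV m).
sr (vV m.+1).
apply: teq_Aeq; rewrite /lc3.
move: (V m.+2) (V m.+1) (V m) => X2 X1 X0.
apply: teqP => x; rewrite !(tcoef_add, tcoef_scale, tcoef_sub).
move: (tcoef X0 x) (tcoef X1 x) (tcoef X2 x) => t0 t1 t2.
rewrite /beta (pz1 _ hq) -PoszD addn1 !pz exprM !P_cl !Pp_cl !exprVn.
rewrite !(exprS (q ^+ 2)).
rewrite /aw0 /aw1 /aw2 /au0 /au1 /au2 /pp /ctilde /aa.
have hR : (q ^+ 2) ^+ m != 0 by rewrite expf_neq0 // expf_neq0.
move: hR; move: ((q ^+ 2) ^+ m) => R hR.
have hq21 := hq21; have hqm21 := hqm21.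
field; by rewrite hq21 hq2 hq hR hp h2.
Qed.

Lemma main0 : AE (actK q (vtpow q hbar 0%:Z)) (rhs q hbar c 0).
Proof.
rewrite /actK /rhs.
change (vtpow q hbar 0%:Z) with (V 0).
sr E_part; rewrite tadd0r.
have -> : beta q 0 = 0 by rewrite /beta mulr0 expr0 subrr mul0r.
rewrite mulr0; sr tscale0.
change (V 0) with (tone F); sr Y_one; reflexivity.
Qed.

Lemma main1 : AE (actK q (vtpow q hbar 1%:Z)) (rhs q hbar c 1).
Proof.
rewrite /actK /rhs.
have e1 : (1%:Z - 1 = 0%:Z)%R by [].
have e2 : (1%:Z - 2 = Negz 0)%R by [].
rewrite e1 e2.
change (vtpow q hbar 1%:Z) with (V 1).
change (vtpow q hbar 0%:Z) with (V 0).
change (vtpow q hbar (Negz 0)) with tz.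
sr E_part; rewrite tadd0r.
sr (XY_V 0); sr (YX_V 0).
have X0 : teq (actX q (V 0)) tz by exact: X_one.
have Y0 : teq (actY q (V 0)) tz by exact: Y_one.
sr X0; try sr Y0; try sr tmul0r; sr (vV 0).
apply: teq_Aeq.
move: (V 1) (V 0) => X1 X0'.
apply: teqP => x; rewrite !(tcoef_add, tcoef_scale, tcoef_sub) tcoef_nil.
move: (tcoef X0' x) (tcoef X1 x) => t0 t1.
rewrite /beta (pz1 _ hq) -PoszD !pz /P /Pp !big_ord1 !expr0.
rewrite /aa /ctilde.
have hq21 := hq21.
field; by rewrite ?hq21 ?hq2 ?hq ?hp ?h2.
Qed.

End Main.

Theorem proposition1 (q hbar c : CC) (hq0 : q != 0)
    (hgen : forall n : nat, (0 < n)%N -> q ^+ n != 1) (k : nat) :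
  Aeq q hbar c (actK q (vtpow q hbar (k%:Z))) (rhs q hbar c k).
Proof.
have hq2 : 1 - q ^+ 2 != 0.
  by rewrite subr_eq0 eq_sym; apply: hgen.
have hp : q ^+ 2 + 1 != 0.
  apply/negP => /eqP e.
  have e2 : q ^+ 2 = -1 by apply/eqP; rewrite -subr_eq0 opprK e.
  have : q ^+ 4 != 1 by apply: hgen.
  by rewrite (_ : 4%N = (2 * 2)%N) // exprM e2 sqrrN expr1n eqxx.
have h2 : (2 : CC) != 0 by rewrite pnatr_eq0.
case: k => [|[|m]].
- exact: main0.
- exact: main1.
- exact: main2.
Qed.
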